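(* Let $S$ be a rectangular domain and $\ell,\ell'\in C(S)$. Then $\ell'\succeq\ell$ if and only if every vertex of $\ell'$ belongs to $A(\ell)$, where $$A(\ell)=\bigcup_{(t_*,x_* )\text{ vertex of }\ell}\{(t,x)\in\tilde{\mathbb{Z}}^2: t\ge t_*+|x-x_*|\}.$$
   Context: Lattice and domains. $\tilde{\mathbb{Z}}^2=\{(t,x)\in\mathbb{Z}^2:t+x\text{ even}\}$; edges join points at Euclidean distance $\sqrt2$. A rectangular domain is a nonempty set $S=\{(t,x)\in\tilde{\mathbb{Z}}^2: a\le t+x\le b,\ c\le t-x\le d\}$ with even integers $a\le b$, $c\le d$. $\bar S$ is $S$ together with all points joined by an edge to a point of $S$; $\partial\bar S=\bar S\setminus S$; $\mathbb{E}(\bar S)$ is the set of edges with an endpoint in $S$. Broken traces. A broken trace is $\ell=(y_0,e_1,y_1,\dots,e_n,y_n)$, $n\ge1$, with $y_i=(t_i,x_i)\in\tilde{\mathbb{Z}}^2$, $e_i=\langle y_{i-1},y_i\rangle$, $x_i=x_{i-1}+1$, $t_i-t_{i-1}\in\{-1,1\}$. Its vertices are $y_0,\dots,y_n$. - $D(\ell)=\{x_0,\dots,x_n\}$, and $t_\ell(x)$ is the $t$-coordinate of the vertex of $\ell$ with second coordinate $x$. - $\ell\subseteq\bar S$ means $y_0,y_n\in\bar S$, $y_1,\dots,y_{n-1}\in S$, all $e_i\in\mathbb{E}(\bar S)$. - $C(S)$ is the set of $\ell\subseteq\bar S$ with $y_0,y_n\in\partial\bar S$. Order. $\ell'\succeq\ell$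 means that $t_{\ell'}(x)\ge t_\ell(x)$ for all $x\in D(\ell)\cap D(\ell')$, and that $t_{\ell'}(x')\ge t_\ell(x)$ for some $x'\in D(\ell')$, $x\in D(\ell)$. *)

(* Defs.v *)
From Stdlib Require Import ZArith List.
Import ListNotations.
Open Scope Z_scope.

(* A point (t,x) of Z^2; it is in the lattice Z~^2 iff t + x is even. *)
Definition pt := (Z * Z)%type.
Definition in_lattice (p : pt) : Prop := Z.even (fst p + snd p) = true.

(* Edges join lattice points at Euclidean distance sqrt 2. *)
Definition adjacent (p q : pt) : Prop :=
  in_lattice p /\ in_lattice q /\
  Z.abs (fst p - fst q) = 1 /\ Z.abs (snd p - snd q) = 1.

Definition in_S (a b c d : Z) (p : pt) : Prop :=
  in_lattice p /\
  a <= fst p + snd p <= b /\ c <= fst p - snd p <= d.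

Definition is_rect_domain (a b c d : Z) : Prop :=
  Z.even a = true /\ Z.even b = true /\ Z.even c = true /\ Z.even d = true /\
  a <= b /\ c <= d /\ (exists p, in_S a b c d p).

Definition in_Sbar (a b c d : Z) (p : pt) : Prop :=
  in_S a b c d p \/ (exists q, in_S a b c d q /\ adjacent p q).

Definition in_dSbar (a b c d : Z) (p : pt) : Prop :=
  in_Sbar a b c d p /\ ~ in_S a b c d p.

Definition edge_in_ESbar (a b c d : Z) (p q : pt) : Prop :=
  adjacent p q /\ (in_S a b c d p \/ in_S a b c d q).

(* A broken trace l = (y_0, e_1, y_1, ..., e_n, y_n) is represented by its
   first vertex y_0 (tr_start) and the list [y_1; ...; y_n] (tr_rest). *)
Record trace := mkTrace { tr_start : pt; tr_rest : list pt }.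

Definition vertices (l : trace) : list pt := tr_start l :: tr_rest l.
Definition last_vertex (l : trace) : pt := last (tr_rest l) (tr_start l).
Definition interior_vertices (l : trace) : list pt := removelast (tr_rest l).

Fixpoint consec (R : pt -> pt -> Prop) (p : pt) (l : list pt) : Prop :=
  match l with
  | [] => True
  | q :: l' => R p q /\ consec R q l'
  end.

Definition trace_step (p q : pt) : Prop :=
  snd q = snd p + 1 /\ (fst q - fst p = 1 \/ fst q - fst p = -1).

Definition is_broken_trace (l : trace) : Prop :=
  in_lattice (tr_start l) /\ tr_rest l <> [] /\
  consec trace_step (tr_start l) (tr_rest l).

Definition trace_in_Sbar (a b c d : Z) (l : trace) : Prop :=
  in_Sbar a b c d (tr_start l) /\ in_Sbar a b c d (last_vertex l) /\
  (forall y, In y (interior_vertices l) -> in_S a b c d y) /\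
  consec (edge_in_ESbar a b c d) (tr_start l) (tr_rest l).

Definition in_C (a b c d : Z) (l : trace) : Prop :=
  is_broken_trace l /\ trace_in_Sbar a b c d l /\
  in_dSbar a b c d (tr_start l) /\ in_dSbar a b c d (last_vertex l).

(* l' ⪰ l.  Since a broken trace has exactly one vertex with given second
   coordinate x, t_l(x) is the t-coordinate of the vertex (t,x) of l. *)
Definition trace_ge (l' l : trace) : Prop :=
  (forall t x t', In (t, x) (vertices l) -> In (t', x) (vertices l') -> t' >= t) /\
  (exists t' x' t x, In (t', x') (vertices l') /\ In (t, x) (vertices l) /\ t' >= t).

Definition in_A (l : trace) (p : pt) : Prop :=
  in_lattice p /\
  exists ts xs, In (ts, xs) (vertices l) /\ fst p >= ts + Z.abs (snd p - xs).

(* Main.v *)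
Require Import Defs.
From Stdlib Require Import ZArith List Lia.
Import ListNotations.
Open Scope Z_scope.

Lemma last_cons_ne : forall (l:list pt) d d', l <> [] -> last l d = last l d'.
Proof.
  induction l as [|a l IH]; intros d d' H; [congruence|].
  destruct l as [|b l]; [reflexivity|].
  transitivity (last (b::l) d); [reflexivity|].
  transitivity (last (b::l) d'); [|reflexivity].
  apply IH; discriminate.
Qed.

Lemma last_cons : forall (l:list pt) (r d:pt), last (r::l) d = last l r.
Proof.
  intros l r d. destruct l as [|p l']; [reflexivity|].
  transitivity (last (p::l') d); [reflexivity|]. apply last_cons_ne; discriminate.
Qed.

Lemma in_last : forall (l:list pt) (d:pt), In (last l d) (d::l).
Proof.
  induction l as [|a l IH]; intros d. simpl; left; auto.
  rewrite last_cons. right. apply IH.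
Qed.

Lemma consec_app : forall R p l1 l2,
  consec R p (l1 ++ l2) <-> consec R p l1 /\ consec R (last l1 p) l2.
Proof.
  intros R p l1; revert p. induction l1 as [|r l1 IH]; intros p l2.
  simpl; tauto. rewrite last_cons. simpl. rewrite IH. tauto.
Qed.

Lemma step_after : forall l p, consec trace_step p l -> forall q, In q l ->
  snd p < snd q /\ fst p + snd p <= fst q + snd q /\ fst q - snd q <= fst p - snd p.
Proof.
  induction l as [|r l IH]; simpl; intros p H q Hq. contradiction.
  destruct H as [[H1 H2] H3]. destruct Hq as [<-|Hq]. lia.
  destruct (IH r H3 q Hq). lia.
Qed.

Lemma mono : forall l p, consec trace_step p l -> forall q1 q2, In q1 (p::l) -> In q2 (p::l) ->
  snd q1 <= snd q2 -> fst q1 + snd q1 <= fst q2 + snd q2 /\ fst q2 - snd q2 <= fst q1 - snd q1.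
Proof.
  induction l as [|r l IH]; intros p H q1 q2 H1 H2 Hle.
  - simpl in H1,H2. destruct H1 as [<-|[]]; destruct H2 as [<-|[]]; lia.
  - pose proof (step_after (r::l) p H) as SA. simpl in H. destruct H as [_ H].
    destruct H1 as [<-|H1]; destruct H2 as [<-|H2].
    + lia.
    + destruct (SA q2 H2); lia.
    + destruct (SA q1 H1); lia.
    + apply (IH r H); auto.
Qed.

Lemma range : forall l p, consec trace_step p l -> forall q, In q (p::l) ->
  snd p <= snd q <= snd (last l p).
Proof.
  induction l as [|r l IH]; intros p H q Hq.
  simpl in Hq; destruct Hq as [<-|[]]; simpl; lia.
  rewrite last_cons. simpl in H. destruct H as [[Hs _] H].
  destruct Hq as [<-|Hq].
  pose proof (IH r H r (or_introl eq_refl)). lia.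
  pose proof (IH r H q Hq). lia.
Qed.

Lemma exx : forall l p, consec trace_step p l -> forall x, snd p <= x <= snd (last l p) ->
  exists t, In (t,x) (p::l).
Proof.
  induction l as [|r l IH]; intros p H x Hx.
  simpl in Hx. exists (fst p). assert (x = snd p) by lia. subst x. destruct p; left; reflexivity.
  rewrite last_cons in Hx. simpl in H. destruct H as [[Hs _] H].
  destruct (Z.eq_dec x (snd p)).
  exists (fst p). subst x. destruct p; left; reflexivity.
  destruct (IH r H x) as [t Ht]. lia. exists t; right; auto.
Qed.

Lemma latt : forall l p, consec trace_step p l -> in_lattice p -> forall q, In q (p::l) -> in_lattice q.
Proof.
  induction l as [|r l IH]; intros p H Hp q Hq.
  destruct Hq as [<-|[]]; auto.
  simpl in H. destruct H as [[Hs Ht] H]. destruct Hq as [<-|Hq]. auto.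
  apply (IH r H); auto. unfold in_lattice in *. apply Z.even_spec. apply Z.even_spec in Hp.
  destruct Hp as [k Hk]. destruct Ht as [Ht|Ht]; [exists (k+1)|exists k]; lia.
Qed.

Definition evens (a b c d : Z) := Z.even a = true /\ Z.even b = true /\ Z.even c = true /\ Z.even d = true.

Lemma start_facts a b c d y0 r1 : evens a b c d -> in_lattice y0 -> ~ in_S a b c d y0 ->
  in_S a b c d r1 -> trace_step y0 r1 ->
  fst y0 + snd y0 <= b /\ c <= fst y0 - snd y0 /\ a-2 <= fst y0 + snd y0 /\
  fst y0 - snd y0 <= d+2 /\ (fst y0 + snd y0 = a-2 \/ fst y0 - snd y0 = d+2).
Proof.
  intros [ea [eb [ec ed]]] L N S1 St.
  destruct y0 as [t0 x0], r1 as [t1 x1]; unfold in_S, in_lattice, trace_step in *; simpl in *.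
  assert (N' : ~ (a <= t0 + x0 <= b /\ c <= t0 - x0 <= d)) by tauto.
  apply Z.even_spec in ea, eb, ec, ed, L. destruct ea, eb, ec, ed, L. lia.
Qed.

Lemma end_facts a b c d yp yn : evens a b c d -> in_lattice yn -> ~ in_S a b c d yn ->
  in_S a b c d yp -> trace_step yp yn ->
  a <= fst yn + snd yn /\ fst yn - snd yn <= d /\ fst yn + snd yn <= b+2 /\
  c-2 <= fst yn - snd yn /\ (fst yn + snd yn = b+2 \/ fst yn - snd yn = c-2).
Proof.
  intros [ea [eb [ec ed]]] L N S1 St.
  destruct yn as [t0 x0], yp as [t1 x1]; unfold in_S, in_lattice, trace_step in *; simpl in *.
  assert (N' : ~ (a <= t0 + x0 <= b /\ c <= t0 - x0 <= d)) by tauto.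
  apply Z.even_spec in ea, eb, ec, ed, L. destruct ea, eb, ec, ed, L. lia.
Qed.

Record Good (a b c d : Z) (l : trace) : Prop := {
  g_lat : forall q, In q (vertices l) -> in_lattice q;
  g_mono : forall p q, In p (vertices l) -> In q (vertices l) -> snd p <= snd q ->
     fst p + snd p <= fst q + snd q /\ fst q - snd q <= fst p - snd p;
  g_range : forall q, In q (vertices l) -> snd (tr_start l) <= snd q <= snd (last_vertex l);
  g_ex : forall x, snd (tr_start l) <= x <= snd (last_vertex l) -> exists t, In (t,x) (vertices l);
  g_nonlast : forall q, In q (vertices l) -> snd q < snd (last_vertex l) ->
     fst q + snd q <= b /\ c <= fst q - snd q;
  g_nonfirst : forall q, In q (vertices l) -> snd (tr_start l) < snd q ->
     a <= fst q + snd q /\ fst q - snd q <= d;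
  g_box : forall q, In q (vertices l) ->
     a - 2 <= fst q + snd q <= b + 2 /\ c - 2 <= fst q - snd q <= d + 2;
  g_first : fst (tr_start l) + snd (tr_start l) = a - 2 \/ fst (tr_start l) - snd (tr_start l) = d + 2;
  g_last : fst (last_vertex l) + snd (last_vertex l) = b + 2 \/ fst (last_vertex l) - snd (last_vertex l) = c - 2;
  g_sbox : fst (tr_start l) + snd (tr_start l) <= b /\ c <= fst (tr_start l) - snd (tr_start l);
  g_lbox : a <= fst (last_vertex l) + snd (last_vertex l) /\ fst (last_vertex l) - snd (last_vertex l) <= d;
  g_sin : In (tr_start l) (vertices l);
  g_lin : In (last_vertex l) (vertices l)
}.

Lemma good_of a b c d l : is_rect_domain a b c d -> in_C a b c d l -> Good a b c d l.
Proof.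
  intros [ea [eb [ec [ed _]]]] H.
  assert (E : evens a b c d) by (repeat split; auto).
  destruct l as [y0 rest].
  unfold in_C, is_broken_trace, trace_in_Sbar, in_dSbar, vertices, last_vertex,
    interior_vertices in *; simpl in *.
  destruct H as [[L0 [Hne Hst]] [[_ [_ [Hint Hed]]] [[_ N0] [_ Nn]]]].
  set (mid := removelast rest) in *.
  set (yn := last rest y0) in *.
  assert (Hr : rest = mid ++ [yn]) by (apply app_removelast_last; auto).
  assert (LAT := latt rest y0 Hst L0).
  assert (SF : fst y0 + snd y0 <= b /\ c <= fst y0 - snd y0 /\ a-2 <= fst y0 + snd y0 /\
    fst y0 - snd y0 <= d+2 /\ (fst y0 + snd y0 = a-2 \/ fst y0 - snd y0 = d+2)).
  { destruct rest as [|r1 rest']; [congruence|].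
    simpl in Hst, Hed. destruct Hed as [[_ [Hs|Hs]] _]; [contradiction|].
    apply (start_facts a b c d y0 r1); tauto. }
  assert (EF : a <= fst yn + snd yn /\ fst yn - snd yn <= d /\ fst yn + snd yn <= b+2 /\
    c-2 <= fst yn - snd yn /\ (fst yn + snd yn = b+2 \/ fst yn - snd yn = c-2)).
  { rewrite Hr in Hst, Hed. apply consec_app in Hst, Hed.
    destruct Hst as [_ [Hst _]]. destruct Hed as [_ [[_ [Hs|Hs]] _]]; [|contradiction].
    apply (end_facts a b c d (last mid y0) yn); auto.
    apply LAT. apply in_last. }
  assert (MEM : forall q, In q (y0 :: rest) -> q = y0 \/ In q mid \/ q = yn).
  { intros q [<-|Hq]; [auto|]. rewrite Hr in Hq. apply in_app_or in Hq.
    destruct Hq as [Hq|[<-|[]]]; auto. }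
  assert (RG := range rest y0 Hst).
  unfold yn, mid in *. constructor; unfold vertices, last_vertex; simpl.
  - exact LAT.
  - apply mono; auto.
  - exact RG.
  - apply exx; auto.
  - intros q Hq Hlt. destruct (MEM q Hq) as [->|[Hm| ->]].
    + lia.
    + destruct (Hint q Hm) as [_ ?]. lia.
    + lia.
  - intros q Hq Hlt. destruct (MEM q Hq) as [->|[Hm| ->]].
    + lia.
    + destruct (Hint q Hm) as [_ ?]. lia.
    + lia.
  - intros q Hq. destruct (MEM q Hq) as [->|[Hm| ->]].
    + lia.
    + destruct (Hint q Hm) as [_ ?]. lia.
    + lia.
  - tauto.
  - tauto.
  - lia.
  - lia.
  - left; auto.
  - apply in_last.
Qed.

Theorem mainTheorem7 (a b c d : Z) (hS : is_rect_domain a b c d)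
  (l l' : trace) (hl : in_C a b c d l) (hl' : in_C a b c d l') :
  trace_ge l' l <-> (forall y, In y (vertices l') -> in_A l y).
Proof.
  pose proof (good_of a b c d l hS hl) as G.
  pose proof (good_of a b c d l' hS hl') as G'.
  destruct G as [lat mo rg ex nl nf bx fi la sb lb sin lin].
  destruct G' as [lat' mo' rg' ex' nl' nf' bx' fi' la' sb' lb' sin' lin'].
  set (y0 := tr_start l) in *. set (yn := last_vertex l) in *.
  set (z0 := tr_start l') in *. set (zn := last_vertex l') in *.
  unfold trace_ge, in_A. split.
  - intros [H1 H2] [t' x'] Hy. split; [apply lat'; auto|].
    pose proof (rg' _ Hy) as Rg. pose proof (bx' _ Hy) as Bx. simpl in Rg, Bx.
    destruct (Z_lt_le_dec (snd yn) x') as [Hgt|Hle].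
    + exists (fst yn), (snd yn). split; [rewrite <- surjective_pairing; auto|]. simpl.
      destruct la as [la|la]; [exfalso|lia].
      destruct (Z_le_gt_dec (snd z0) (snd yn)) as [Ov|Dj].
      * destruct (ex' (snd yn)) as [t'' Ht'']; [lia|].
        assert (t'' >= fst yn) by (apply (H1 (fst yn) (snd yn) t''); auto;
          rewrite <- surjective_pairing; auto).
        pose proof (nl' _ Ht''). simpl in *. lia.
      * destruct H2 as [t1' [x1' [t1 [x1 [In1' [In1 Hge]]]]]].
        pose proof (rg' _ In1'). pose proof (rg _ In1). simpl in *.
        pose proof (mo' _ _ sin' In1'). pose proof (mo _ _ In1 lin).
        pose proof (bx' _ In1'). pose proof (bx _ In1). simpl in *. lia.
    + destruct (Z_lt_le_dec x' (snd y0)) as [Hlt|Hge0].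
      * exists (fst y0), (snd y0). split; [rewrite <- surjective_pairing; auto|]. simpl.
        destruct fi as [fi|fi]; [lia|exfalso].
        destruct (Z_le_gt_dec (snd y0) (snd zn)) as [Ov|Dj].
        -- destruct (ex' (snd y0)) as [t'' Ht'']; [lia|].
           assert (t'' >= fst y0) by (apply (H1 (fst y0) (snd y0) t''); auto;
             rewrite <- surjective_pairing; auto).
           pose proof (nf' _ Ht''). simpl in *. lia.
        -- destruct H2 as [t1' [x1' [t1 [x1 [In1' [In1 Hge]]]]]].
           pose proof (rg' _ In1'). pose proof (rg _ In1). simpl in *.
           pose proof (mo' _ _ In1' lin'). pose proof (mo _ _ sin In1).
           pose proof (bx' _ In1'). pose proof (bx _ In1). simpl in *. lia.
      * destruct (ex x') as [t Ht]; [lia|]. exists t, x'. split; auto.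
        assert (t' >= t) by (apply (H1 t x' t'); auto). simpl. lia.
  - intros Hall. split.
    + intros t x t'' Hv Hv'. destruct (Hall _ Hv') as [_ [ts [xs [Hs Hge]]]].
      simpl in Hge. destruct (Z_le_gt_dec x xs).
      * pose proof (mo _ _ Hv Hs). simpl in *. lia.
      * pose proof (mo _ _ Hs Hv). simpl in *. lia.
    + destruct (Hall _ sin') as [_ [ts [xs [Hs Hge]]]].
      exists (fst z0), (snd z0), ts, xs. split; [rewrite <- surjective_pairing; auto|].
      split; auto. lia.
Qed.
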